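(* Let $A$ be a simple marked arrangement of $n$ pseudolines, drawn as a wiring diagram, and let $m,k,u,m',k',u'$ be nonnegative integers with $k \leq m$ and $k \leq n-u$. Then \[|\Gamma(m,k,u,m',k',u')| \leq \binom{n-u}{k}\left(\frac{m}{n-u}\right)^k 2^{n-k-u}.\] Symmetrically, if $k' \leq m'$ and $k' \leq n-u'$, then \[|\Gamma(m,k,u,m',k',u')| \leq \binom{n-u'}{k'}\left(\frac{m'}{n-u'}\right)^{k'} 2^{n-k'-u'}.\]
   Context: An arrangement of pseudolines is a finite set of simple curves in the plane, each extending to infinity in both directions, every two intersecting in exactly one point where they cross; simple means no three share a point; marked means an unbounded cell is distinguished as the north-cell, and the south-cell is the cell on the opposite side of every pseudoline. The arrangement is drawn as a wiring diagram: the pseudolines lie on $n$ horizontal wires except near crossings, where two pseudolines on neighboring wires swap wires; the north-cell is the cell above all wires and the south-cell the cell below all wires. A cutpath is a directed path from the north-cell to the south-cell in the dual graph (vertices are cells, edges correspond to shared pseudoline edges, oriented from north side to south side); equivalently, a cutpath moves from cell to cell, each time leaving the current cell by crossing one of the pseudolines bounding it from below. For a cell $c$, let $d$ be the number of edges bounding it from below (''exits''), labelled $1,\dots,d$ from left to right. If $d=1$ the single exit is the unique exit of $c$; if $d\geq 2$, exit $1$ is the left exit, exit $d$ the right exit, and exits $2,\dots,d-1$ are middle exits. The reversed view of a cutpath is obtained by rotating the plane by $180$ degrees (so the south-cell becomes the top cell) and reading the cutpath from the south-cell to the north-cell, with exits defined in the same way in the rotated picture. $\Gamma(m,k,u,m',k',u')$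 is the set of cutpaths of $A$ such that, viewed from the north-cell to the south-cell, the number of middle exits taken is $k$, the number of unique exits taken is $u$, and the total number of middle exits of all visited cells (taken or not) is $m$; and in the reversed view the corresponding numbers are $k'$, $u'$, $m'$. *)

(* Defs.v *)
From mathcomp Require Import all_boot all_order all_algebra.
Set Implicit Arguments. Unset Strict Implicit. Unset Printing Implicit Defensive.

(* Wiring diagrams.  A wiring diagram of n pseudolines is a word w : seq nat *)
(* of crossings; crossing number t (0-based) has position i = nth 0 w t     *)
(* (with i < n-1) and swaps the pseudolines currently on wire positions i   *)
(* and i.+1 (positions 0..n-1 counted from the top).  Pseudolines are       *)
(* labelled by their initial wire position.  Columns 0..size w: crossing t  *)
(* lies between column t and column t.+1.                                   *)

Definition swap_at (s : seq nat) (i : nat) : seq nat :=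
  set_nth 0 (set_nth 0 s i (nth 0 s i.+1)) i.+1 (nth 0 s i).

(* which pseudoline is on which wire position just before crossing t *)
Definition wstate (n : nat) (w : seq nat) (t : nat) : seq nat :=
  foldl swap_at (iota 0 n) (take t w).

Definition crosses (n : nat) (w : seq nat) (t p q : nat) : bool :=
  let s := wstate n w t in
  let i := nth 0 w t in
  ((nth 0 s i == p) && (nth 0 s i.+1 == q)) ||
  ((nth 0 s i == q) && (nth 0 s i.+1 == p)).

Definition wiring_diagram (n : nat) (w : seq nat) : bool :=
  all (fun i => i.+1 < n) w &&
  [forall p : 'I_n, forall q : 'I_n,
     (p < q) ==> (count (fun t => crosses n w t p q) (iota 0 (size w)) == 1)].

(* Cells.  Level j (0 <= j <= n) is the strip between wire positions j-1  *)
(* and j (level 0 = above all wires, level n = below all wires).  A       *)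
(* crossing at position i interrupts level i.+1.  A cell is a maximal run *)
(* of columns at a level not interrupted by a crossing; we identify it by *)
(* (level j, first column a).  Level 0 is the north-cell, level n the     *)
(* south-cell.                                                            *)

Definition valid_start (w : seq nat) (j a : nat) : bool :=
  (a == 0) || ((0 < a) && ((nth 0 w a.-1).+1 == j)).

(* last column of the cell starting at column a on level j *)
Definition cell_end (w : seq nat) (j a : nat) : nat :=
  a + find (fun x => x.+1 == j) (drop a w).

Definition overlap (w : seq nat) (j a j' a' : nat) : bool :=
  maxn a a' <= minn (cell_end w j a) (cell_end w j' a').

(* cells of level j' adjacent to cell (j,a), listed left to right *)
Definition adj_cells (w : seq nat) (j a j' : nat) : seq nat :=
  [seq a' <- iota 0 (size w).+1 | valid_start w j' a' && overlap w j a j' a'].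

(* Exit statistics for a cell with exits L (ordered left to right in the  *)
(* current view), when the exit x is taken.                               *)
Definition n_middle (L : seq nat) : nat := size L - 2.
Definition taken_middle (L : seq nat) (x : nat) : bool :=
  (2 <= size L) && (1 < (index x L).+1 < size L).
Definition is_unique (L : seq nat) : bool := size L == 1.

(* Cutpaths: sequences of cells c_0 (north) , ..., c_n (south), c_j on    *)
(* level j, given by its first column, consecutive cells sharing an edge. *)

Definition cp (N n : nat) (p : n.+1.-tuple 'I_N.+1) (j : nat) : nat :=
  nth ord0 p j.

Definition is_cutpath (n : nat) (w : seq nat)
  (p : n.+1.-tuple 'I_(size w).+1) : bool :=
  [forall j : 'I_n.+1, valid_start w j (cp p j)] &&
  [forall j : 'I_n, overlap w j (cp p j) j.+1 (cp p j.+1)].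

(* downward view (north to south): cell c_j, j < n, exits to level j+1 *)
Definition down_exits n w (p : n.+1.-tuple 'I_(size w).+1) (j : nat) :=
  adj_cells w j (cp p j) j.+1.
(* reversed view (rotated by 180 degrees, read south to north): cell c_j,*)
(* 0 < j, exits to level j-1; left-to-right in the rotated picture is    *)
(* right-to-left in the original one.                                    *)
Definition up_exits n w (p : n.+1.-tuple 'I_(size w).+1) (j : nat) :=
  rev (adj_cells w j (cp p j) j.-1).

Definition stat_m n w (p : n.+1.-tuple 'I_(size w).+1) : nat :=
  \sum_(j < n) n_middle (down_exits p j).
Definition stat_k n w (p : n.+1.-tuple 'I_(size w).+1) : nat :=
  \sum_(j < n) taken_middle (down_exits p j) (cp p j.+1).
Definition stat_u n w (p : n.+1.-tuple 'I_(size w).+1) : nat :=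
  \sum_(j < n) is_unique (down_exits p j).

Definition stat_m' n w (p : n.+1.-tuple 'I_(size w).+1) : nat :=
  \sum_(j < n) n_middle (up_exits p j.+1).
Definition stat_k' n w (p : n.+1.-tuple 'I_(size w).+1) : nat :=
  \sum_(j < n) taken_middle (up_exits p j.+1) (cp p j).
Definition stat_u' n w (p : n.+1.-tuple 'I_(size w).+1) : nat :=
  \sum_(j < n) is_unique (up_exits p j.+1).

Definition Gamma (n : nat) (w : seq nat) (m k u m' k' u' : nat) :
  {set n.+1.-tuple 'I_(size w).+1} :=
  [set p | [&& is_cutpath p, stat_m p == m, stat_k p == k, stat_u p == u,
             stat_m' p == m', stat_k' p == k' & stat_u' p == u']].

(* Main.v *)
Require Import Defs.
From mathcomp Require Import all_boot all_order all_algebra.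
From mathcomp Require Import ring lra zify.
Import Order.TTheory GRing.Theory Num.Theory.
Local Open Scope ring_scope.

Module ArithM.


Definition F (N k m : nat) : rat := 'C(N,k)%:R * (m%:R / N%:R) ^+ k * 2 ^+ (N - k).

Lemma F_ge0 N k m : 0 <= F N k m.
Proof. by rewrite /F !mulr_ge0 // ?exprn_ge0 // divr_ge0. Qed.

Lemma tangent (s y : rat) k : 0 <= s -> 0 <= y ->
  y ^+ k.+1 + k.+1%:R * y ^+ k * (s - y) <= s ^+ k.+1.
Proof.
move=> hs hy; elim: k => [|k IH].
  by rewrite expr1 expr0; lra.
have hY : 0 <= y ^+ k by rewrite exprn_ge0.
have h2 : 0 <= k.+1%:R * y ^+ k * ((s - y) ^+ 2).
  by apply: mulr_ge0; [apply: mulr_ge0 => //; exact: ler0n | exact: sqr_ge0].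
have h3 := ler_wpM2l hs IH.
rewrite (exprS s k.+1) (exprS y k.+1) (exprS y k) in h3 *.
rewrite -[k.+2]addn1 natrD -[k.+1]addn1 natrD in h2 h3 *.
move: h2 h3; set Y := y ^+ k; set P := s ^+ k.+1; set K := k%:R.
rewrite expr2 => h2 h3.
nra.
Qed.

Lemma core N k mu m : (mu <= m)%N ->
  2 * F N k (m - mu) + mu%:R * (if (1 <= k)%N then F N (k - 1) (m - mu) else 0)
  <= F N.+1 k m.
Proof.
move=> hmu; case: k => [|k].
  by rewrite /F !bin0 !expr0 !mul1r subn0 exprS mulr0 addr0.
rewrite /= subn1 /=.
case: N => [|N].
  rewrite /F bin0n /= !mul0r mulr0 add0r.
  case: k => [|k].
    rewrite bin0 bin1 !expr0 !expr1 !mul1r.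
    by move: hmu; rewrite -(ler_nat rat) => hmu'; lra.
  by rewrite !bin_small // !mul0r !mulr0.
case: (ltnP N.+1 k) => hk.
  rewrite /F (bin_small hk) (@bin_small N.+1 k.+1) ?(@bin_small N.+2 k.+1) //;
    try lia.
  by rewrite !mul0r !mulr0 addr0.
set M := N.+1.
have h2 : 2 * ('C(M, k.+1)%:R * 2 ^+ (M - k.+1)) = 'C(M, k.+1)%:R * 2 ^+ (M - k) :> rat.
  case: (ltnP k M) => hkM.
    by rewrite mulrCA -exprS; congr (_ * 2 ^+ _); lia.
  by rewrite bin_small ?mul0r ?mulr0 //; lia.
have e1 : (M.+1 * 'C(M, k.+1) = (M - k) * 'C(M.+1, k.+1))%N.
  by rewrite -{1}[M]/(M.+1.-1) mul_bin_down subSS.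
have e2 : (M.+1 * 'C(M, k) = k.+1 * 'C(M.+1, k.+1))%N.
  by rewrite -{1}[M]/(M.+1.-1) mul_bin_diag.
set y := (m - mu)%:R / M%:R : rat.
set s := m%:R / M.+1%:R : rat.
have hM : 0 < M%:R :> rat by rewrite ltr0n.
have hy : 0 <= y by rewrite divr_ge0.
have hs : 0 <= s by rewrite divr_ge0.
have hyM : M%:R * y = m%:R - mu%:R.
  by rewrite /y mulrC divfK ?natrB // pnatr_eq0.
have hsM : M.+1%:R * s = m%:R.
  by rewrite /s mulrC divfK // pnatr_eq0.
have T := @tangent s y k hs hy.
rewrite /F -/y -/s subSS.
have hP : 0 <= 2 ^+ (M - k) :> rat by rewrite exprn_ge0.
have key : 'C(M, k.+1)%:R * y ^+ k.+1 + mu%:R * ('C(M, k)%:R * y ^+ k)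
           <= 'C(M.+1, k.+1)%:R * s ^+ k.+1.
  have hM1 : 0 < M.+1%:R :> rat by rewrite ltr0n.
  rewrite -(ler_pM2l hM1).
  have e1' : M.+1%:R * 'C(M, k.+1)%:R = (M%:R - k%:R) * 'C(M.+1, k.+1)%:R :> rat.
    by rewrite -natrB // -!natrM e1.
  have e2' : M.+1%:R * 'C(M, k)%:R = k.+1%:R * 'C(M.+1, k.+1)%:R :> rat.
    by rewrite -!natrM e2.
  have hmu' : mu%:R = M.+1%:R * s - M%:R * y :> rat by rewrite hsM hyM; ring.
  have hCb : 0 <= 'C(M.+1, k.+1)%:R * M.+1%:R :> rat by rewrite mulr_ge0.
  have T' := ler_wpM2l hCb T.
  have -> : M.+1%:R * ('C(M, k.+1)%:R * y ^+ k.+1 + mu%:R * ('C(M, k)%:R * y ^+ k))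
     = (M.+1%:R * 'C(M, k.+1)%:R) * y ^+ k.+1 + mu%:R * ((M.+1%:R * 'C(M, k)%:R) * y ^+ k) :> rat
    by ring.
  rewrite e1' e2' hmu'.
  rewrite (exprS y k) in T' *.
  rewrite -[M.+1]addn1 natrD -[k.+1]addn1 natrD in T' *.
  move: T'; set Y := y ^+ k; set S := s ^+ _; set Cb := 'C(_, _)%:R.
  move=> T'; lra.
have e : 2 * ('C(M, k.+1)%:R * y ^+ k.+1 * 2 ^+ (M - k.+1)) =
         ('C(M, k.+1)%:R * 2 ^+ (M - k)) * y ^+ k.+1 :> rat.
  by rewrite -h2; ring.
rewrite e.
have -> : 'C(M, k.+1)%:R * 2 ^+ (M - k) * y ^+ k.+1 +
    mu%:R * ('C(M, k)%:R * y ^+ k * 2 ^+ (M - k)) =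
    ('C(M, k.+1)%:R * y ^+ k.+1 + mu%:R * ('C(M, k)%:R * y ^+ k)) * 2 ^+ (M - k)
  by ring.
exact: ler_wpM2r.
Qed.

End ArithM.
Import ArithM.

Module PathsM.


Definition G L u k m : rat := if (u <= L)%N then F (L - u) k m else 0.

Lemma G_ge0 L u k m : 0 <= G L u k m.
Proof. by rewrite /G; case: ifP => // _; exact: F_ge0. Qed.

Section Abstract.
Variable ch : nat -> nat -> seq nat.
Hypothesis ch_uniq : forall j a, uniq (ch j a).

Fixpoint paths (j a L : nat) : seq (seq nat) :=
  if L is L'.+1 then flatten [seq [seq b :: s | s <- paths j.+1 b L'] | b <- ch j a]
  else [:: [::]].

Fixpoint stm j a (s : seq nat) : nat :=
  if s is b :: s' then (n_middle (ch j a) + stm j.+1 b s')%N else 0%N.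
Fixpoint stk j a (s : seq nat) : nat :=
  if s is b :: s' then (taken_middle (ch j a) b + stk j.+1 b s')%N else 0%N.
Fixpoint stu j a (s : seq nat) : nat :=
  if s is b :: s' then (is_unique (ch j a) + stu j.+1 b s')%N else 0%N.
Fixpoint valid j a (s : seq nat) : bool :=
  if s is b :: s' then (b \in ch j a) && valid j.+1 b s' else true.

Lemma valid_paths j a s : valid j a s -> s \in paths j a (size s).
Proof.
elim: s j a => [|b s IH] j a /=; first by rewrite inE.
case/andP => hb hv; apply/flattenP.
exists [seq b :: s0 | s0 <- paths j.+1 b (size s)]; first by apply/mapP; exists b.
by apply: map_f; exact: IH.
Qed.

Definition Pst j a m k u (s : seq nat) :=
  [&& stm j a s == m, stk j a s == k & stu j a s == u].

Lemma count_bound L j a m k u :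
  (count (Pst j a m k u) (paths j a L))%:R <= G L u k m.
Proof.
elim: L j a m k u => [|L IH] j a m k u.
  rewrite /= /Pst /= addn0 /G leqn0.
  case: m => [|m]; case: k => [|k]; case: u => [|u] //=; rewrite ?F_ge0 //.

set cs := ch j a.
set mu := n_middle cs; set nu := (is_unique cs : nat).
set H := fun t : bool => if [&& (mu <= m)%N, (t <= k)%N & (nu <= u)%N]
                         then G L (u - nu) (k - t) (m - mu) else 0.
have step : forall b, (count (Pst j a m k u) [seq b :: s | s <- paths j.+1 b L])%:R
                      <= H (taken_middle cs b).
  move=> b; rewrite count_map /H.
  case: ifP => hg.
    case/and3P: hg => h1 h2 h3.
    rewrite (eq_count (a2 := Pst j.+1 b (m - mu)%N (k - taken_middle cs b)%N (u - nu)%N)) ?IH //.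
    move=> s /=; rewrite /Pst /= -/cs -/mu -/nu.
    by apply/idP/idP => /and3P [/eqP e1 /eqP e2 /eqP e3]; apply/and3P; split; apply/eqP; lia.
  rewrite (eq_count (a2 := pred0)) ?count_pred0 //.
  move=> s /=; rewrite /Pst /= -/cs -/mu -/nu.
  apply/negbTE/negP => /and3P [/eqP e1 /eqP e2 /eqP e3]; move: hg; lia.
rewrite /= count_flatten -map_comp sumnE big_map natr_sum.
apply: le_trans (ler_sum _ (fun b _ => step b)) _.
rewrite (big_nth 0%N).
rewrite (eq_big_nat _ _ (F2 := fun i => H ((2 <= size cs) && (1 < i.+1 < size cs))%N)); last first.
  by move=> i /andP [_ hi]; rewrite /taken_middle index_uniq.
rewrite /H /mu /nu /n_middle /is_unique; clear step H mu nu.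
move: (size cs) => d.
case: d => [|[|d]].
- by rewrite big_geq ?G_ge0.
- rewrite big_nat1 /= subn0.
  case: u => [|u]; first by rewrite /= G_ge0.
  rewrite /G (_ : (u.+1 - 1 = u)%N) ?subn0 ?subSS ?ltnS //; lia.
rewrite (big_nat_recl d.+1 0) // (big_nat_recr d 0) //=.
rewrite (eq_big_nat _ _ (F2 := fun i => if [&& (d <= m)%N, (1 <= k)%N & (0 <= u)%N]
    then G L (u - 0) (k - 1) (m - d) else 0)); last first.
  by move=> i /andP [_ hi]; rewrite !ltnS hi !subSS subn0.
rewrite sumr_const_nat ltnn !subSS !subn0 /= !andbT.
case: (leqP d m) => hdm; last by rewrite /= mul0rn !addr0 G_ge0.
rewrite /=.
case: (leqP u L) => huL; last first.
  rewrite /G (leqNgt u L) huL /= if_same mul0rn !addr0; exact: (G_ge0 L.+1 u k m).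
rewrite /G huL (leqW huL) subSn //.
have := @core (L - u) k d m hdm.
rewrite -mulr_natl; lra.
Qed.
End Abstract.

End PathsM.
Import PathsM.

Module MainM.
Set Implicit Arguments. Unset Strict Implicit.



Section Seqs.
Variable ch : nat -> nat -> seq nat.
Variable c : nat -> nat.

Lemma stm_seq j L : stm ch j (c j) [seq c i.+1 | i <- iota j L] =
  (\sum_(j <= i < j + L) n_middle (ch i (c i)))%N.
Proof.
elim: L j => [|L IH] j /=; first by rewrite addn0 big_geq.
by rewrite IH (big_ltn (m := j)) ?addnS ?addSn //; lia.
Qed.

Lemma stk_seq j L : stk ch j (c j) [seq c i.+1 | i <- iota j L] =
  (\sum_(j <= i < j + L) taken_middle (ch i (c i)) (c i.+1))%N.
Proof.
elim: L j => [|L IH] j /=; first by rewrite addn0 big_geq.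
by rewrite IH (big_ltn (m := j)) ?addnS ?addSn //; lia.
Qed.

Lemma stu_seq j L : stu ch j (c j) [seq c i.+1 | i <- iota j L] =
  (\sum_(j <= i < j + L) is_unique (ch i (c i)))%N.
Proof.
elim: L j => [|L IH] j /=; first by rewrite addn0 big_geq.
by rewrite IH (big_ltn (m := j)) ?addnS ?addSn //; lia.
Qed.

Lemma valid_seq j L : (forall i, (j <= i < j + L)%N -> c i.+1 \in ch i (c i)) ->
  valid ch j (c j) [seq c i.+1 | i <- iota j L].
Proof.
elim: L j => [|L IH] j hv //=.
rewrite hv ?IH //; last by rewrite leqnn addnS ltnS leq_addr.
move=> i /andP [h1 h2]; apply: hv; apply/andP; split; lia.
Qed.
End Seqs.

Section Cut.
Variables (n : nat) (w : seq nat) (p : n.+1.-tuple 'I_(size w).+1).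
Hypothesis hp : is_cutpath p.

Lemma cut_vs j : (j <= n)%N -> valid_start w j (cp p j).
Proof.
move=> hj; case/andP: hp => /forallP h _.
by have := h (Ordinal (n := n.+1) (m := j) hj).
Qed.

Lemma cut_ov j : (j < n)%N -> overlap w j (cp p j) j.+1 (cp p j.+1).
Proof.
move=> hj; case/andP: hp => _ /forallP h.
by have := h (Ordinal (n := n) (m := j) hj).
Qed.

Lemma cp_lt j : (cp p j < (size w).+1)%N.
Proof. exact: ltn_ord. Qed.

Lemma cp0 : cp p 0 = 0%N.
Proof. by have := @cut_vs 0 (leq0n n); rewrite /valid_start /=; case/orP => [/eqP|/andP []]. Qed.

Lemma cpn : all (fun i => i.+1 < n)%N w -> cp p n = 0%N.
Proof.
move=> /allP hw; have := @cut_vs n (leqnn n); rewrite /valid_start.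
case/orP => [/eqP //|/andP [h0 /eqP he]].
have hin : nth 0%N w (cp p n).-1 \in w.
  by apply: mem_nth; rewrite -ltnS prednK // cp_lt.
by have := hw _ hin; rewrite he ltnn.
Qed.
End Cut.

Lemma overlapC w j a j' a' : overlap w j a j' a' = overlap w j' a' j a.
Proof. by rewrite /overlap maxnC minnC. Qed.

Lemma part1 n w m k u m' k' u' :
  (#|Gamma n w m k u m' k' u'|%:R : rat) <= G n u k m.
Proof.
pose chD := fun j a => adj_cells w j a j.+1.
have huniq : forall j a, uniq (chD j a).
  by move=> j a; rewrite filter_uniq ?iota_uniq.
apply: le_trans (@count_bound chD huniq n 0%N 0%N m k u).
rewrite ler_nat cardE.
pose fD := fun p : n.+1.-tuple 'I_(size w).+1 => [seq cp p i.+1 | i <- iota 0 n].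
rewrite -(size_map fD) -size_filter.
apply: uniq_leq_size.
  rewrite map_inj_in_uniq ?enum_uniq // => p q.
  rewrite !mem_enum !inE => /andP [hp _] /andP [hq _] e.
  apply: eq_from_tnth => i; apply: val_inj => /=; rewrite !(tnth_nth ord0).
  case: i => [[|i] hi] /=; first by have := cp0 hp; have := cp0 hq; rewrite /cp => -> ->.
  have := congr1 (fun s => nth 0%N s i) e.
  by rewrite /fD /= !(nth_map 0%N) ?size_iota ?nth_iota.
move=> s /mapP [p hp ->]; rewrite mem_filter.
rewrite mem_enum inE in hp; case/and4P: hp => hc /eqP hm /eqP hk /andP [/eqP hu _].
apply/andP; split.
  rewrite /Pst.
  have := stm_seq chD (fun i => cp p i) 0 n.
  have := stk_seq chD (fun i => cp p i) 0 n.
  have := stu_seq chD (fun i => cp p i) 0 n.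
  rewrite /= (cp0 hc) add0n !big_mkord => -> -> ->.
  by rewrite -hm -hk -hu !eqxx.
have := @valid_paths chD 0 0 (fD p).
rewrite /fD size_map size_iota; apply.
have := valid_seq (ch := chD) (c := fun i => cp p i) (j := 0) (L := n).
rewrite /= (cp0 hc); apply => i hi.
rewrite /chD /adj_cells mem_filter mem_iota cp_lt /= cut_vs ?cut_ov //; lia.
Qed.

Lemma part2 n w m k u m' k' u' : wiring_diagram n w ->
  (#|Gamma n w m k u m' k' u'|%:R : rat) <= G n u' k' m'.
Proof.
case/andP => hw _.
pose chU := fun i a => rev (adj_cells w (n - i) a (n - i).-1).
have huniq : forall j a, uniq (chU j a).
  by move=> j a; rewrite rev_uniq filter_uniq ?iota_uniq.
apply: le_trans (@count_bound chU huniq n 0%N 0%N m' k' u').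
rewrite ler_nat cardE.
pose fU := fun p : n.+1.-tuple 'I_(size w).+1 => [seq cp p (n - i.+1) | i <- iota 0 n].
rewrite -(size_map fU) -size_filter.
apply: uniq_leq_size.
  rewrite map_inj_in_uniq ?enum_uniq // => p q.
  rewrite !mem_enum !inE => /andP [hp _] /andP [hq _] e.
  apply: eq_from_tnth => i; apply: val_inj => /=; rewrite !(tnth_nth ord0).
  case: i => [t ht] /=.
  have [->|htn] := eqVneq t n.
    by have := cpn hp hw; have := cpn hq hw; rewrite /cp => -> ->.
  have := congr1 (fun s => nth 0%N s (n - t.+1)) e.
  rewrite /fU /= !(nth_map 0%N) ?size_iota ?nth_iota ?add0n; try lia.
  by rewrite (_ : n - (n - t.+1).+1 = t)%N //; lia.
move=> s /mapP [p hp ->]; rewrite mem_filter.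
rewrite mem_enum inE in hp; case/and4P: hp => hc _ _ /and4P [_ /eqP hm /eqP hk /eqP hu].
apply/andP; split.
  rewrite /Pst.
  have := stm_seq chU (fun i => cp p (n - i)) 0 n.
  have := stk_seq chU (fun i => cp p (n - i)) 0 n.
  have := stu_seq chU (fun i => cp p (n - i)) 0 n.
  rewrite subn0 (cpn hc hw) add0n => -> -> ->.
  rewrite -hm -hk -hu /stat_m' /stat_k' /stat_u'.
  apply/and3P; split; apply/eqP; rewrite big_nat_rev big_mkord; apply: eq_bigr => -[i hi] _ /=;
    rewrite /chU /up_exits add0n (_ : n - (n - i.+1) = i.+1)%N //; try lia.
  by rewrite (_ : n - (n - i.+1).+1 = i)%N //; lia.
have := @valid_paths chU 0 0 (fU p).
rewrite /fU size_map size_iota; apply.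
have := valid_seq (ch := chU) (c := fun i => cp p (n - i)) (j := 0) (L := n).
rewrite /= subn0 (cpn hc hw); apply => i hi.
rewrite /chU /= (_ : n - i = (n - i.+1).+1)%N; last by lia.
rewrite /= mem_rev /adj_cells mem_filter mem_iota cp_lt /= cut_vs 1?overlapC ?cut_ov //; lia.
Qed.

End MainM.
Import MainM.

Theorem mainTheorem3 (n : nat) (w : seq nat) (m k u m' k' u' : nat) :
  wiring_diagram n w ->
  ((k <= m)%N -> (k <= n - u)%N ->
     (#|Gamma n w m k u m' k' u'|%:R : rat) <=
     'C(n - u, k)%:R * ((m%:R / (n - u)%:R) ^+ k) * 2 ^+ (n - k - u)) /\
  ((k' <= m')%N -> (k' <= n - u')%N ->
     (#|Gamma n w m k u m' k' u'|%:R : rat) <=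
     'C(n - u', k')%:R * ((m'%:R / (n - u')%:R) ^+ k') * 2 ^+ (n - k' - u')).
Proof.
move=> hw; split => _ _.
  apply: le_trans (part1 n w m k u m' k' u') _.
  rewrite /G; case: ifP => _; first by rewrite /F subnAC.
  by have := F_ge0 (n - u) k m; rewrite /F subnAC.
apply: le_trans (part2 m k u m' k' u' hw) _.
rewrite /G; case: ifP => _; first by rewrite /F subnAC.
by have := F_ge0 (n - u') k' m'; rewrite /F subnAC.
Qed.
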